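(* Let $M\ge2$ and let $\mathbb{F}=\sum_{j,l=1}^M|j,l\rangle\langle l,j|$ be the flip operator on $\mathbb{R}^M\otimes\mathbb{R}^M$. The matrix $$P=\mathbb{1}-\mathbb{F}+\mathbb{F}^{T_1}=\mathbb{1}+\sum_{\gamma<0}G_\gamma\otimes G_\gamma$$ is positive semidefinite, satisfies $\langle\psi|P|\psi\rangle=1$ for all normalized real product vectors $\psi=a\otimes b$ ($a,b\in\mathbb{R}^M$, $\|a\|=\|b\|=1$), and has $\mathrm{rank}(P)=1+(M^2-M)/2$. For $M=2,3$ this rank is the smallest possible among real positive semidefinite matrices $P'$ on $\mathbb{R}^M\otimes\mathbb{R}^M$ satisfying $\langle\psi|P'|\psi\rangle=1$ for all normalized real product vectors $\psi$.
   Context: $\mathbb{F}^{T_1}$ denotes the partial transpose of $\mathbb{F}$ on the first factor (standard basis). $\{G_\gamma\}_{\gamma<0}$ is a basis of the real antisymmetric $M\times M$ matrices, orthogonal w.r.t. $(X,Y)\mapsto\mathrm{tr}[XY^T]$ and normalized by $\mathrm{tr}[G_\gamma G_\gamma^T]=2$ (e.g. the matrices $E_{ab}-E_{ba}$, $a<b$, with $E_{ab}$ the matrix units); it has $M(M-1)/2$ elements. *)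

(* Defs.v *)
From HB Require Import structures.
From mathcomp Require Import all_boot all_order all_algebra.
From mathcomp Require Import mxtens.
From mathcomp Require Import reals.
Set Implicit Arguments. Unset Strict Implicit. Unset Printing Implicit Defensive.
Import Order.TTheory GRing.Theory Num.Theory.
Local Open Scope ring_scope.

(* Matrices on R^M (x) R^M are 'M[R]_(M * M), with the Kronecker product
   A *t B (mxtens.tensmx); basis vector |j,l> has index mxtens_index (j, l). *)

Definition flip (R : nzRingType) (M : nat) : 'M[R]_(M * M) :=
  \sum_(j < M) \sum_(l < M) (delta_mx j l *t delta_mx l j).

(* Partial transpose on the first tensor factor (standard basis):
   X^{T_1}_{(i,j),(k,l)} = X_{(k,j),(i,l)} *)
Definition ptrans1 (R : Type) (M : nat) (X : 'M[R]_(M * M)) : 'M[R]_(M * M) :=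
  \matrix_(r, c)
    X (mxtens_index ((mxtens_unindex c).1, (mxtens_unindex r).2))
      (mxtens_index ((mxtens_unindex r).1, (mxtens_unindex c).2)).

Definition Pmat (R : nzRingType) (M : nat) : 'M[R]_(M * M) :=
  1%:M - flip R M + ptrans1 (flip R M).

Definition psdmx (R : numDomainType) (n : nat) (A : 'M[R]_n) : Prop :=
  A^T = A /\ forall x : 'cV[R]_n, 0 <= (x^T *m A *m x) ord0 ord0.

Definition unit_on_products (R : nzRingType) (M : nat) (X : 'M[R]_(M * M)) : Prop :=
  forall a b : 'cV[R]_M, a^T *m a = 1%:M -> b^T *m b = 1%:M ->
    (a *t b)^T *m X *m (a *t b) = 1%:M.

(* Main.v *)
Require Import Defs.
From HB Require Import structures.
From mathcomp Require Import all_boot all_order all_algebra.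
From mathcomp Require Import mxtens.
From mathcomp Require Import reals.
From mathcomp Require Import fingroup perm.
Set Implicit Arguments. Unset Strict Implicit. Unset Printing Implicit Defensive.
Import Order.TTheory GRing.Theory Num.Theory.
Local Open Scope ring_scope.

Notation idx i j := (mxtens_index (i, j)).

Lemma idx_eq (m n : nat) (i k : 'I_m) (j l : 'I_n) :
  (idx i j == idx k l) = (i == k) && (j == l).
Proof.
by rewrite (inj_eq (can_inj (@mxtens_indexK m n))) xpair_eqE.
Qed.

Lemma sum_tens (R : nmodType) (m n : nat) (F : 'I_(m * n) -> R) :
  \sum_(r < m * n) F r = \sum_(i < m) \sum_(j < n) F (idx i j).
Proof.
rewrite pair_big /= (reindex (@mxtens_index m n)) /=; last first.
  by exists (@mxtens_unindex m n) => r _; rewrite (mxtens_indexK, mxtens_unindexK).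
by apply: eq_bigr => -[i j].
Qed.

Lemma tens_ext (R : Type) (m n : nat) (A B : 'M[R]_(m * n)) :
  (forall i j k l, A (idx i j) (idx k l) = B (idx i j) (idx k l)) -> A = B.
Proof.
move=> H; apply/matrixP => r c.
rewrite -[r](@mxtens_unindexK m n) -[c](@mxtens_unindexK m n).
by case: (mxtens_unindex r) => i j; case: (mxtens_unindex c) => k l.
Qed.

Lemma sum_delta (R : pzRingType) n (i : 'I_n) (F : 'I_n -> R) :
  \sum_(k < n) (i == k)%:R * F k = F i.
Proof.
rewrite (bigD1 i) //= eqxx mul1r big1 ?addr0 // => k.
by rewrite eq_sym => /negbTE ->; rewrite mul0r.
Qed.

Lemma sum_delta' (R : pzRingType) n (i : 'I_n) (F : 'I_n -> R) :
  \sum_(k < n) F k * (k == i)%:R = F i.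
Proof.
rewrite (bigD1 i) //= eqxx mulr1 big1 ?addr0 // => k /negbTE ->.
by rewrite mulr0.
Qed.

Lemma sum_delta2 (R : pzRingType) n (i : 'I_n) (F : 'I_n -> R) :
  \sum_(k < n) F k * (i == k)%:R = F i.
Proof.
rewrite (bigD1 i) //= eqxx mulr1 big1 ?addr0 // => k.
by rewrite eq_sym => /negbTE ->; rewrite mulr0.
Qed.

Lemma flipE (R : nzRingType) M (i j k l : 'I_M) :
  flip R M (idx i j) (idx k l) = ((i == l) && (j == k))%:R.
Proof.
rewrite /flip summxE.
under eq_bigr do rewrite summxE.
under eq_bigr do under eq_bigr do rewrite tensmxE !mxE.
rewrite (bigD1 i) //= [X in _ + X]big1 ?addr0; last first.
  move=> a ha; apply: big1 => b _.
  by rewrite eq_sym (negbTE ha) /= mul0r.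
rewrite (bigD1 k) //= [X in _ + X]big1 ?addr0; last first.
  by move=> b hb; rewrite eq_sym (negbTE hb) andbF mul0r.
rewrite !eqxx /= eq_sym [k == j]eq_sym.
by rewrite mul1r [l == i]eq_sym andbC.
Qed.

Definition swp M (r : 'I_(M * M)) : 'I_(M * M) :=
  idx (mxtens_unindex r).2 (mxtens_unindex r).1.

Lemma swpE M (i j : 'I_M) : swp (idx i j) = idx j i.
Proof. by rewrite /swp mxtens_indexK. Qed.

Lemma swpK M : involutive (@swp M).
Proof.
move=> r; rewrite -[r](@mxtens_unindexK M M).
by case: (mxtens_unindex r) => i j; rewrite !swpE.
Qed.

Definition sig M : 'S_(M * M) := perm (inv_inj (@swpK M)).

Lemma sigE M r : sig M r = swp r.
Proof. by rewrite permE. Qed.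

Lemma sigV M : ((sig M)^-1)%g = sig M.
Proof.
apply/permP => r.
by rewrite -{1}[r](@swpK M) -sigE permK sigE.
Qed.

Lemma sig2 M : (sig M * sig M)%g = 1%g.
Proof. by rewrite -{1}sigV mulVg. Qed.

Lemma flip_perm (R : nzRingType) M : flip R M = perm_mx (sig M).
Proof.
apply: tens_ext => i j k l.
rewrite flipE /perm_mx !mxE sigE swpE idx_eq.
by rewrite [j == k]eq_sym andbC eq_sym.
Qed.

Lemma rank_trace (R : fieldType) n (E : 'M[R]_n) :
  E *m E = E -> \tr E = (\rank E)%:R.
Proof.
move=> EE.
have BC : row_base E *m col_base E = 1%:M.
  apply: (row_full_inj (col_base_full E)); apply: (row_free_inj (row_base_free E)).
  rewrite mulmx1 mulmxA.
  transitivity ((col_base E *m row_base E) *m (col_base E *m row_base E)).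
    by rewrite !mulmxA.
  by rewrite mulmx_base EE.
by rewrite -{1}(mulmx_base E) mxtrace_mulC BC mxtrace1.
Qed.

Lemma flip2 (R : nzRingType) M : flip R M *m flip R M = 1%:M.
Proof. by rewrite flip_perm -perm_mxM sig2 perm_mx1. Qed.

Lemma flipT (R : nzRingType) M : (flip R M)^T = flip R M.
Proof. by rewrite flip_perm tr_perm_mx sigV. Qed.

Lemma tr_flip (R : nzRingType) M : \tr (flip R M) = M%:R.
Proof.
rewrite /mxtrace sum_tens.
transitivity (\sum_(i < M) (1 : R)); last by rewrite sumr_const card_ord.
apply: eq_bigr => i _; rewrite -(sum_delta i (fun _ => (1 : R))).
apply: eq_bigr => j _; rewrite flipE mulr1.
by rewrite eq_sym andbb.
Qed.

Definition Phi (R : nzRingType) M : 'cV[R]_(M * M) :=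
  \col_r ((mxtens_unindex r).1 == (mxtens_unindex r).2)%:R.

Lemma PhiE (R : nzRingType) M (i j : 'I_M) : Phi R M (idx i j) 0 = (i == j)%:R.
Proof. by rewrite mxE mxtens_indexK. Qed.

Lemma col_ext (R : Type) (m n : nat) (u v : 'cV[R]_(m * n)) :
  (forall i j, u (idx i j) 0 = v (idx i j) 0) -> u = v.
Proof.
move=> H; apply/matrixP => r c; rewrite [c]ord1.
rewrite -[r](@mxtens_unindexK m n).
by case: (mxtens_unindex r) => i j.
Qed.

Lemma ptrans_flip (R : nzRingType) M : ptrans1 (flip R M) = Phi R M *m (Phi R M)^T.
Proof.
apply: tens_ext => i j k l.
rewrite !mxE !mxtens_indexK /= flipE big_ord1 !mxE !mxtens_indexK /=.
rewrite -natrM mulnb; congr (_%:R); congr (nat_of_bool _).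
by rewrite andbC eq_sym.
Qed.

Lemma flip_Phi (R : nzRingType) M : flip R M *m Phi R M = Phi R M.
Proof.
rewrite flip_perm -row_permE; apply: col_ext => i j.
by rewrite mxE sigE swpE !PhiE eq_sym.
Qed.

Lemma PhiTPhi (R : nzRingType) M : (Phi R M)^T *m Phi R M = (M%:R)%:M.
Proof.
apply/matrixP => a b; rewrite [a]ord1 [b]ord1 !mxE /= mulr1n sum_tens.
transitivity (\sum_(i < M) (1 : R)); last by rewrite sumr_const card_ord.
apply: eq_bigr => i _; rewrite -(sum_delta i (fun _ => (1 : R))).
by apply: eq_bigr => j _; rewrite !mxE !mxtens_indexK /= mulr1 -natrM mulnb andbb.
Qed.

From mathcomp Require Import ring lra zify.

Definition Amx (R : realType) M : 'M[R]_(M * M) := 2^-1 *: (1%:M - flip R M).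

Lemma Amx2 (R : realType) M : Amx R M *m Amx R M = Amx R M.
Proof.
have h : (1%:M - flip R M) *m (1%:M - flip R M) = 2%:R *: (1%:M - flip R M).
  rewrite mulmxBl !mulmxBr !mul1mx ?mulmx1 flip2 scaler_nat mulr2n.
  by rewrite opprB addrA.
rewrite /Amx -scalemxAl -scalemxAr scalerA h scalerA; congr (_ *: _).
by field.
Qed.

Lemma AmxT (R : realType) M : (Amx R M)^T = Amx R M.
Proof. by rewrite /Amx linearZ /= linearB /= trmx1 flipT. Qed.

Lemma Amx_Phi (R : realType) M : Amx R M *m Phi R M = 0.
Proof. by rewrite /Amx -scalemxAl mulmxBl mul1mx flip_Phi subrr scaler0. Qed.

Lemma tr_Amx (R : realType) M : \tr (Amx R M) = 2^-1 * ((M * M)%:R - M%:R).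
Proof. by rewrite /Amx mxtraceZ raddfB /= mxtrace1 tr_flip. Qed.

Lemma Pmat_A (R : realType) M : Pmat R M = 2%:R *: Amx R M + Phi R M *m (Phi R M)^T.
Proof.
rewrite /Pmat /Amx scalerA mulfV ?pnatr_eq0 // scale1r -ptrans_flip.
by [].
Qed.

Lemma K_nat M : ((M * M - M) %/ 2 * 2 = M * M - M)%N.
Proof.
have ev : ~~ odd (M * M - M).
  case: M => [|n] //.
  by rewrite oddB ?leq_pmulr // oddM andbb addbb.
by rewrite divn2 muln2 even_halfK.
Qed.

Lemma K_R (R : realType) M :
  (((M * M - M) %/ 2)%:R : R) = 2^-1 * ((M * M)%:R - M%:R).
Proof.
have le : (M <= M * M)%N by case: M => // n; rewrite leq_pmulr.
apply: (@mulIf _ 2%:R); first by rewrite pnatr_eq0.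
rewrite -natrM K_nat natrB // mulrC mulrA mulfV ?pnatr_eq0 // mul1r.
by [].
Qed.

Lemma rank_struct (R : realType) n (A : 'M[R]_n) (f : 'cV[R]_n) (m : R) :
  m != 0 -> A *m A = A -> A^T = A -> A *m f = 0 -> f^T *m f = m%:M ->
  (\rank (2%:R *: A + f *m f^T)%R)%:R = \tr A + 1.
Proof.
move=> m0 AA AT Af ff.
have fA : f^T *m A = 0 by rewrite -AT -trmx_mul Af trmx0.
have Aff : A *m (f *m f^T) = 0 by rewrite mulmxA Af mul0mx.
have ffA : (f *m f^T) *m A = 0 by rewrite -mulmxA fA mulmx0.
have ffff : (f *m f^T) *m (f *m f^T) = m *: (f *m f^T).
  by rewrite mulmxA -(mulmxA f) ff mul_mx_scalar scalemxAl.
set E := (A + m^-1 *: (f *m f^T))%R.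
have EE : E *m E = E.
  rewrite /E mulmxDl !mulmxDr -!scalemxAl -!scalemxAr AA Aff ffA ffff.
  rewrite !scaler0 addr0 add0r scalerA scalerA mulrAC mulVf // mul1r.
  by [].
have PE : (2%:R *: A + f *m f^T) *m E = 2%:R *: A + f *m f^T.
  rewrite /E mulmxDl !mulmxDr -!scalemxAl -!scalemxAr AA Aff ffA ffff.
  by rewrite !scaler0 addr0 add0r scalerA mulVf // scale1r.
have EP : (2%:R *: A + f *m f^T) *m (2%:R^-1 *: A + (m^-1 * m^-1) *: (f *m f^T)) = E.
  rewrite /E mulmxDl !mulmxDr -!scalemxAl -!scalemxAr AA Aff ffA ffff.
  rewrite !scaler0 addr0 add0r !scalerA mulfV ?pnatr_eq0 // scale1r.
  by rewrite -mulrA mulVf // mulr1.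
have HPE : \rank (2%:R *: A + f *m f^T)%R = \rank E.
  apply/eqP; rewrite eqn_leq; apply/andP; split.
    by have := mxrankM_maxr (2%:R *: A + f *m f^T) E; rewrite PE.
  by have := mxrankM_maxl (2%:R *: A + f *m f^T) (2%:R^-1 *: A + (m^-1 * m^-1) *: (f *m f^T)); rewrite EP.
rewrite HPE.
rewrite -rank_trace // /E mxtraceD mxtraceZ mxtrace_mulC ff mxtrace_scalar.
by rewrite mulr1n mulVf.
Qed.

Lemma rank_Pmat (R : realType) M : (0 < M)%N ->
  \rank (Pmat R M) = (1 + (M * M - M) %/ 2)%N.
Proof.
move=> M0; apply/eqP; rewrite -(eqr_nat R) natrD K_R -tr_Amx addrC.
rewrite Pmat_A (@rank_struct _ _ _ _ (M%:R)) ?pnatr_eq0 -?lt0n //.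
- exact: Amx2.
- exact: AmxT.
- exact: Amx_Phi.
- exact: PhiTPhi.
Qed.

Definition vecG (R : nzRingType) M (X : 'M[R]_M) : 'rV[R]_(M * M) :=
  \row_r X (mxtens_unindex r).1 (mxtens_unindex r).2.

Lemma vecGE (R : nzRingType) M (X : 'M[R]_M) i j : vecG X 0 (idx i j) = X i j.
Proof. by rewrite mxE mxtens_indexK. Qed.

Lemma row_ext (R : Type) (m n : nat) (u v : 'rV[R]_(m * n)) :
  (forall i j, u 0 (idx i j) = v 0 (idx i j)) -> u = v.
Proof.
move=> H; apply/matrixP => c r; rewrite [c]ord1.
rewrite -[r](@mxtens_unindexK m n).
by case: (mxtens_unindex r) => i j.
Qed.

Lemma vecG_flip (R : nzRingType) M (X : 'M[R]_M) : X^T = - X ->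
  vecG X *m flip R M = - vecG X.
Proof.
move=> XT; rewrite flip_perm -sigV -col_permE; apply: row_ext => i j.
rewrite mxE sigE swpE !vecGE mxE vecGE.
have := congr1 (fun Y : 'M[R]_M => Y i j) XT; rewrite !mxE => ->.
by [].
Qed.

Lemma vecG_dot (R : nzRingType) M (X Y : 'M[R]_M) :
  vecG X *m (vecG Y)^T = (\tr (X *m Y^T))%:M.
Proof.
apply/matrixP => a b; rewrite [a]ord1 [b]ord1 !mxE /= mulr1n sum_tens /mxtrace.
apply: eq_bigr => i _; rewrite mxE; apply: eq_bigr => j _.
by rewrite !mxE !mxtens_indexK.
Qed.

Lemma vecG_outer (R : nzRingType) M (X Y : 'M[R]_M) i j k l :
  ((vecG X)^T *m vecG Y) (idx i j) (idx k l) = X i j * Y k l.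
Proof. by rewrite !mxE big_ord1 !mxE !mxtens_indexK. Qed.

Lemma complete (R : realType) M K (G : 'I_K -> 'M[R]_M)
    (hGanti : forall g, (G g)^T = - G g)
    (hGorth : forall g h, g != h -> \tr (G g *m (G h)^T) = 0)
    (hGnorm : forall g, \tr (G g *m (G g)^T) = 2)
    (hK : (K%:R : R) = \tr (Amx R M)) :
  \sum_g (vecG (G g))^T *m vecG (G g) = 2%:R *: Amx R M.
Proof.
set T := \sum_g _.
have TA : T *m Amx R M = T.
  rewrite /T mulmx_suml; apply: eq_bigr => g _.
  rewrite /Amx -scalemxAr -mulmxA mulmxBr mulmx1 vecG_flip // opprK.
  by rewrite -mulr2n -scaler_nat -scalemxAr scalerA mulVf ?pnatr_eq0 // scale1r.
have TT : T^T = T.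
  apply/matrixP => a b; rewrite /T mxE !summxE; apply: eq_bigr => g0 _.
  by rewrite !mxE; apply: eq_bigr => c _; rewrite !mxE mulrC.
have AT : Amx R M *m T = T by rewrite -TT -AmxT -trmx_mul TA.
have T2 : T *m T = 2%:R *: T.
  rewrite /T mulmx_suml scaler_sumr; apply: eq_bigr => g0 _.
  rewrite mulmx_sumr (bigD1 g0) //= big1 ?addr0; last first.
    move=> h hg; rewrite mulmxA -(mulmxA _ (vecG (G g0))) vecG_dot hGorth 1?eq_sym //.
    by rewrite mul_mx_scalar scale0r mul0mx.
  by rewrite mulmxA -(mulmxA _ (vecG (G g0))) vecG_dot hGnorm mul_mx_scalar -scalemxAl.
have trT : \tr T = 2%:R * K%:R.
  rewrite /T raddf_sum /=.
  under eq_bigr do rewrite mxtrace_mulC vecG_dot hGnorm mxtrace_scalar mulr1n.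
  by rewrite sumr_const card_ord mulr_natr.
set D := (Amx R M - 2%:R^-1 *: T)%R.
have DD : D *m D = D.
  rewrite /D; move: (Amx R M) (Amx2 R M) TA AT => A A2 TA' AT'.
  rewrite mulmxBl !mulmxBr A2 -!scalemxAl -!scalemxAr AT' TA' T2 scalerA.
  by rewrite scalerA -mulrA mulVf ?pnatr_eq0 // mulr1 subrr subr0.
have D0 : D = 0.
  apply/eqP; rewrite -mxrank_eq0 -(eqr_nat R) -rank_trace //.
  rewrite /D raddfB /= [\tr (_ *: T)]mxtraceZ trT mulrA mulVf ?pnatr_eq0 // mul1r -hK.
  by rewrite subrr.
move/eqP: D0; rewrite /D subr_eq0 => /eqP ->.
by rewrite scalerA mulfV ?pnatr_eq0 // scale1r.
Qed.

Lemma part1 (R : realType) M (G : 'I_((M * M - M) %/ 2) -> 'M[R]_M)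
    (hGanti : forall g, (G g)^T = - G g)
    (hGorth : forall g h, g != h -> \tr (G g *m (G h)^T) = 0)
    (hGnorm : forall g, \tr (G g *m (G g)^T) = 2) :
  Pmat R M = 1%:M + \sum_(g < (M * M - M) %/ 2) (G g *t G g).
Proof.
have C := complete hGanti hGorth hGnorm (esym (etrans (tr_Amx R M) (esym (K_R R M)))).
apply: tens_ext => i j k l.
have := congr1 (fun X : 'M[R]_(M * M) => X (idx i k) (idx j l)) C.
rewrite summxE /Amx !mxE flipE.
under eq_bigr do rewrite vecG_outer.
move=> HS.
rewrite [in RHS]summxE.
under [in RHS]eq_bigr do rewrite tensmxE.
rewrite HS mulrA mulfV ?pnatr_eq0 // mul1r !mxtens_indexK /= !flipE !idx_eq.
rewrite [k == j]eq_sym [j == i]eq_sym [(k == l) && _]andbC.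
by rewrite addrAC -addrA [X in _ + X]addrC.
Qed.

Lemma tensvE (R : nzRingType) M (a b : 'cV[R]_M) i j :
  (a *t b : 'cV_(M * M)) (idx i j) 0 = a i 0 * b j 0.
Proof.
rewrite mxE mxtens_indexK /=.
by congr (a i _ * b j _); apply: val_inj.
Qed.

Definition qf (R : nzRingType) n (P : 'M[R]_n) (x : 'cV[R]_n) := (x^T *m P *m x) 0 0.

Lemma qfE (R : nzRingType) n (P : 'M[R]_n) (x : 'cV[R]_n) :
  qf P x = \sum_r \sum_c x r 0 * P r c * x c 0.
Proof.
rewrite /qf mxE; under eq_bigr do rewrite mxE mulr_suml.
rewrite exchange_big; apply: eq_bigr => r _; apply: eq_bigr => c _.
by rewrite mxE.
Qed.

Lemma qfD (R : nzRingType) n (A B : 'M[R]_n) x : qf (A + B) x = qf A x + qf B x.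
Proof. by rewrite /qf mulmxDr mulmxDl mxE. Qed.

Lemma qfB (R : nzRingType) n (A B : 'M[R]_n) x : qf (A - B) x = qf A x - qf B x.
Proof. by rewrite /qf mulmxBr mulmxBl !mxE. Qed.

Lemma qf1 (R : nzRingType) n (x : 'cV[R]_n) : qf 1%:M x = \sum_r x r 0 ^+ 2.
Proof. by rewrite /qf mulmx1 mxE; apply: eq_bigr => r _; rewrite mxE expr2. Qed.

Lemma qf_perm (R : nzRingType) n s (x : 'cV[R]_n) :
  qf (perm_mx s) x = \sum_r x r 0 * x (s r) 0.
Proof. by rewrite /qf -mulmxA -row_permE mxE; apply: eq_bigr => r _; rewrite !mxE. Qed.

Lemma qf_outer (R : comNzRingType) n (f x : 'cV[R]_n) :
  qf (f *m f^T) x = (\sum_r x r 0 * f r 0) ^+ 2.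
Proof.
rewrite /qf mulmxA -mulmxA mxE big_ord1 expr2; congr (_ * _).
  by rewrite mxE; apply: eq_bigr => r _; rewrite mxE.
rewrite mxE; apply: eq_bigr => r _; rewrite !mxE mulrC.
by [].
Qed.

Lemma qf_Pmat (R : realType) M (x : 'cV[R]_(M * M)) :
  qf (Pmat R M) x = \sum_r x r 0 ^+ 2 - \sum_r x r 0 * x (sig M r) 0
     + (\sum_r x r 0 * Phi R M r 0) ^+ 2.
Proof. by rewrite /Pmat ptrans_flip qfD qfB qf1 flip_perm qf_perm qf_outer. Qed.

Lemma sum_sq_perm (R : realType) n (s : 'S_n) (a : 'I_n -> R) :
  2%:R * (\sum_r a r ^+ 2 - \sum_r a r * a (s r)) = \sum_r (a r - a (s r)) ^+ 2.
Proof.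
have h : \sum_r a (s r) ^+ 2 = \sum_r a r ^+ 2.
  by rewrite [RHS](reindex_inj (@perm_inj _ s)).
under [RHS]eq_bigr do rewrite sqrrB.
rewrite big_split /= sumrB h sumrMnl -mulr_natl.
set A := \sum_r _; set B := \sum_r _.
ring.
Qed.

Lemma Pmat_psd (R : realType) M : psdmx (Pmat R M).
Proof.
split.
  by rewrite Pmat_A linearD /= linearZ /= AmxT trmx_mul trmxK.
move=> x; rewrite -/(qf _ x) qf_Pmat.
apply: addr_ge0; last exact: sqr_ge0.
rewrite -(@pmulr_rge0 _ 2%:R) // sum_sq_perm.
by apply: sumr_ge0 => r _; exact: sqr_ge0.
Qed.

Lemma Pmat_unit (R : realType) M : unit_on_products (Pmat R M).
Proof.
move=> a b ha hb.
change ((a *t b : 'cV_(M*M))^T *m Pmat R M *m (a *t b : 'cV_(M*M)) = (1%:M : 'M_1)).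
rewrite [LHS]mx11_scalar -/(qf _ _) qf_Pmat.
have na : \sum_i a i 0 ^+ 2 = 1.
  have := congr1 (fun X : 'M[R]_1 => X 0 0) ha; rewrite !mxE /= mulr1n => <-.
  by apply: eq_bigr => i _; rewrite mxE expr2.
have nb : \sum_i b i 0 ^+ 2 = 1.
  have := congr1 (fun X : 'M[R]_1 => X 0 0) hb; rewrite !mxE /= mulr1n => <-.
  by apply: eq_bigr => i _; rewrite mxE expr2.
set d := \sum_i a i 0 * b i 0.
rewrite !sum_tens.
under eq_bigr do under eq_bigr do rewrite tensvE.
under [X in _ - X]eq_bigr do under eq_bigr do rewrite sigE swpE !tensvE.
under [X in _ + X ^+ 2]eq_bigr do under eq_bigr do rewrite tensvE PhiE.
have -> : \sum_i \sum_j (a i 0 * b j 0) ^+ 2 = 1.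
  rewrite -[1]mulr1 -{1}na -nb mulr_suml; apply: eq_bigr => i _.
  by rewrite mulr_sumr; apply: eq_bigr => j _; rewrite exprMn.
have -> : \sum_i \sum_j a i 0 * b j 0 * (a j 0 * b i 0) = d ^+ 2.
  rewrite expr2 /d mulr_suml; apply: eq_bigr => i _.
  rewrite mulr_sumr; apply: eq_bigr => j _.
  by ring.
under [X in _ + X ^+ 2]eq_bigr do rewrite sum_delta2.
by rewrite subrK.
Qed.

Definition Bf (R : nzRingType) n (P : 'M[R]_n) (u v : 'cV[R]_n) := (u^T *m P *m v) 0 0.

Lemma rank_lb (R : realType) n p (P : 'M[R]_n) (w : 'I_p -> 'cV[R]_n) :
  (forall c c', Bf P (w c) (w c') = (c == c')%:R) -> (p <= \rank P)%N.
Proof.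
move=> H.
pose Z : 'M[R]_(n, p) := \matrix_(r, c) w c r 0.
have G : Z^T *m P *m Z = 1%:M.
  apply/matrixP => c c'; rewrite [RHS]mxE -H /Bf !mxE.
  apply: eq_bigr => s _; rewrite !mxE; congr (_ * _).
  by apply: eq_bigr => r _; rewrite !mxE.
have := mxrankM_maxl (Z^T *m P) Z; rewrite G mxrank1 => h.
exact: leq_trans h (mxrankM_maxr _ _).
Qed.

Lemma BfDl (R : comNzRingType) n (P : 'M[R]_n) s t (u u' v : 'cV[R]_n) :
  Bf P (s *: u + t *: u') v = s * Bf P u v + t * Bf P u' v.
Proof.
rewrite /Bf linearD /= !linearZ /= mulmxDl mulmxDl.
by rewrite -!(scalemxAl s) -!(scalemxAl t) !mxE.
Qed.

Lemma BfDr (R : comNzRingType) n (P : 'M[R]_n) s t u v v' :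
  Bf P u (s *: v + t *: v') = s * Bf P u v + t * Bf P u v'.
Proof. by rewrite /Bf mulmxDr -!scalemxAr !mxE. Qed.

Lemma Bf_sym (R : comNzRingType) n (P : 'M[R]_n) u v : P^T = P -> Bf P u v = Bf P v u.
Proof.
move=> PT; rewrite /Bf.
have -> : (u^T *m P *m v) 0 0 = ((u^T *m P *m v)^T) 0 0 by rewrite [RHS]mxE.
by rewrite !trmx_mul trmxK PT mulmxA.
Qed.

Definition ev (R : nzRingType) M (i : 'I_M) : 'cV[R]_M := delta_mx i 0.
Definition tv (R : nzRingType) M (a b : 'cV[R]_M) : 'cV[R]_(M * M) := a *t b.

Lemma ev_dot (R : nzRingType) M (i j : 'I_M) :
  (ev R i)^T *m ev R j = ((i == j)%:R)%:M.
Proof.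
apply/matrixP => a b; rewrite [a]ord1 [b]ord1 !mxE /= mulr1n.
rewrite (bigD1 i) //= big1 ?addr0; last first.
  by move=> k /negbTE hk; rewrite !mxE hk mul0r.
by rewrite !mxE !eqxx /= mul1r andbT eq_sym.
Qed.

Lemma tvE (R : nzRingType) M (a b : 'cV[R]_M) i j : tv a b (idx i j) 0 = a i 0 * b j 0.
Proof. exact: tensvE. Qed.

Lemma tvDl (R : comNzRingType) M (s t : R) (a a' b : 'cV[R]_M) :
  tv (s *: a + t *: a') b = s *: tv a b + t *: tv a' b.
Proof.
by apply: col_ext => i j; rewrite !mxE !mxtens_indexK /=; ring.
Qed.

Lemma tvDr (R : comNzRingType) M (s t : R) (a b b' : 'cV[R]_M) :
  tv a (s *: b + t *: b') = s *: tv a b + t *: tv a b'.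
Proof.
by apply: col_ext => i j; rewrite !mxE !mxtens_indexK /=; ring.
Qed.

Lemma unit_comb (R : realType) M (a a' : 'cV[R]_M) :
  a^T *m a = 1%:M -> a'^T *m a' = 1%:M -> a^T *m a' = 0 ->
  (3%:R/5%:R *: a + 4%:R/5%:R *: a')^T *m (3%:R/5%:R *: a + 4%:R/5%:R *: a') = 1%:M.
Proof.
move=> ha ha' h0.
have h1 : a'^T *m a = 0 by rewrite -[a]trmxK -trmx_mul h0 trmx0.
have tD : forall x y : 'cV[R]_M, (x + y)^T = x^T + y^T.
  by move=> x y; apply/matrixP => p q; rewrite !mxE.
have tZ : forall (c : R) (x : 'cV[R]_M), (c *: x)^T = c *: x^T.
  by move=> c x; apply/matrixP => p q; rewrite !mxE.
rewrite tD !tZ mulmxDl !mulmxDr -!scalemxAl -!scalemxAr.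
rewrite ha ha' h0 h1 !scaler0 addr0 add0r !scalerA -scalerDl.
rewrite -[RHS]scale1r; congr (_ *: _).
by field.
Qed.

Lemma polar_alg (R : realType) n (P : 'M[R]_n) (u v : 'cV[R]_n) :
  P^T = P -> Bf P u u = 1 -> Bf P v v = 1 ->
  Bf P (3%:R/5%:R *: u + 4%:R/5%:R *: v) (3%:R/5%:R *: u + 4%:R/5%:R *: v) = 1 ->
  Bf P u v = 0.
Proof.
move=> PT hu hv.
rewrite BfDl !BfDr hu hv (Bf_sym v u PT) => h.
lra.
Qed.

Lemma Bf_unit (R : realType) M (P : 'M[R]_(M * M)) (a b : 'cV[R]_M) :
  unit_on_products P -> a^T *m a = 1%:M -> b^T *m b = 1%:M ->
  Bf P (tv a b) (tv a b) = 1.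
Proof.
move=> hU ha hb.
have h : (tv a b)^T *m P *m tv a b = (1%:M : 'M_1) := hU a b ha hb.
by rewrite /Bf h mxE.
Qed.

Lemma polar_a (R : realType) M (P : 'M[R]_(M * M)) (a a' b : 'cV[R]_M) :
  P^T = P -> unit_on_products P -> a^T *m a = 1%:M -> a'^T *m a' = 1%:M ->
  a^T *m a' = 0 -> b^T *m b = 1%:M -> Bf P (tv a b) (tv a' b) = 0.
Proof.
move=> PT hU ha ha' h0 hb; apply: polar_alg => //; try exact: Bf_unit.
by rewrite -tvDl; apply: Bf_unit => //; exact: unit_comb.
Qed.

Lemma polar_b (R : realType) M (P : 'M[R]_(M * M)) (a b b' : 'cV[R]_M) :
  P^T = P -> unit_on_products P -> a^T *m a = 1%:M -> b^T *m b = 1%:M ->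
  b'^T *m b' = 1%:M -> b^T *m b' = 0 -> Bf P (tv a b) (tv a b') = 0.
Proof.
move=> PT hU ha hb hb' h0; apply: polar_alg => //; try exact: Bf_unit.
by rewrite -tvDr; apply: Bf_unit => //; exact: unit_comb.
Qed.

Lemma ev_unit (R : nzRingType) M (i : 'I_M) : (ev R i)^T *m ev R i = 1%:M.
Proof. by rewrite ev_dot eqxx. Qed.

Lemma ev_orth (R : nzRingType) M (i j : 'I_M) : i != j -> (ev R i)^T *m ev R j = 0.
Proof.
move=> /negbTE h; rewrite ev_dot h.
by apply/matrixP => p q; rewrite !mxE mul0rn.
Qed.

Lemma gram_x (R : realType) M (P : 'M[R]_(M * M)) (k c c' : 'I_M) :
  P^T = P -> unit_on_products P ->
  Bf P (tv (ev R k) (ev R c)) (tv (ev R k) (ev R c')) = (c == c')%:R.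
Proof.
move=> PT hU; have [->|ne] := eqVneq c c'.
  by apply: Bf_unit => //; exact: ev_unit.
by apply: polar_b => //; (exact: ev_unit || exact: ev_orth).
Qed.

Lemma anti_C (R : realType) M (P : 'M[R]_(M * M)) (k0 k1 i j : 'I_M) :
  P^T = P -> unit_on_products P -> k0 != k1 ->
  Bf P (tv (ev R k0) (ev R i)) (tv (ev R k1) (ev R j)) =
  - Bf P (tv (ev R k0) (ev R j)) (tv (ev R k1) (ev R i)).
Proof.
move=> PT hU hk.
have d : forall l, Bf P (tv (ev R k0) (ev R l)) (tv (ev R k1) (ev R l)) = 0.
  by move=> l; apply: polar_a => //; (exact: ev_unit || exact: ev_orth).
have [<-|ne] := eqVneq i j; first by rewrite d oppr0.
have := @polar_a R M P (ev R k0) (ev R k1) (3%:R/5%:R *: ev R i + 4%:R/5%:R *: ev R j)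
  PT hU (ev_unit _ _) (ev_unit _ _) (ev_orth _ hk).
rewrite unit_comb ?ev_unit ?ev_orth // => /(_ erefl).
rewrite !tvDr BfDl !BfDr !d.
lra.
Qed.

Lemma tv_expand (R : comNzRingType) M (a b : 'cV[R]_M) :
  tv a b = \sum_j b j 0 *: tv a (ev R j).
Proof.
apply: col_ext => i j; rewrite tvE summxE.
under eq_bigr do rewrite mxE tvE mxE.
rewrite (bigD1 j) //= big1 ?addr0; last first.
  by move=> l /negbTE hl; rewrite eq_sym hl /= mulr0 mulr0.
by rewrite !eqxx /= mulr1n mulr1 mulrC.
Qed.

Lemma Bf_sumr (R : comNzRingType) n (P : 'M[R]_n) u m
  (F : 'I_m -> 'cV[R]_n) (d : 'I_m -> R) :
  Bf P u (\sum_j d j *: F j) = \sum_j d j * Bf P u (F j).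
Proof.
rewrite /Bf mulmx_sumr summxE; apply: eq_bigr => j _.
by rewrite -scalemxAr mxE.
Qed.

Lemma lb2 (R : realType) (P : 'M[R]_(2 * 2)) :
  psdmx P -> unit_on_products P -> (2 <= \rank P)%N.
Proof.
case=> PT _ hU.
apply: (@rank_lb _ _ _ P (fun c => tv (ev R (0 : 'I_2)) (ev R c))) => c c'.
exact: gram_x.
Qed.

Lemma lb3 (R : realType) (P : 'M[R]_(3 * 3)) :
  psdmx P -> unit_on_products P -> (4 <= \rank P)%N.
Proof.
case=> PT _ hU.
pose x (k : 'I_3) := tv (ev R 0) (ev R k).
pose y (k : 'I_3) := tv (ev R 1) (ev R k).
pose C : 'M[R]_3 := \matrix_(i, j) Bf P (x i) (y j).
have CT : C^T = - C.
  by apply/matrixP => i j; rewrite !mxE; apply: anti_C.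
have detC : \det C = 0.
  have h : \det C = (-1) ^+ 3 * \det C by rewrite -{1}det_tr CT -scaleN1r detZ.
  move: h; rewrite -signr_odd /= expr1; lra.
have /det0P [v v0 vC] : \det C == 0 by rewrite detC.
pose s := (v *m v^T) 0 0.
have s_ge0 : 0 <= s.
  by rewrite /s mxE; apply: sumr_ge0 => j _; rewrite mxE -expr2 sqr_ge0.
have s_neq0 : s != 0.
  apply/negP => /eqP s0; move/negP: v0; apply; apply/eqP/matrixP => a j.
  rewrite [a]ord1 mxE.
  have hs : \sum_k v 0 k ^+ 2 = 0.
    transitivity s; last exact: s0.
    by rewrite /s mxE; apply: eq_bigr => k _; rewrite mxE expr2.
  have := @psumr_eq0P _ _ predT (fun k => v 0 k ^+ 2) (fun k _ => sqr_ge0 (v 0 k)) hs j isT.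
  by move/eqP; rewrite expf_eq0 /= => /eqP.
have s_gt0 : 0 < s by rewrite lt_def s_neq0.
pose c := (Num.sqrt s)^-1.
pose b : 'cV[R]_3 := c *: v^T.
have sq : Num.sqrt s ^+ 2 = s by rewrite sqr_sqrtr.
have sqn0 : Num.sqrt s != 0 by rewrite gt_eqF // sqrtr_gt0.
have bunit : b^T *m b = 1%:M.
  have -> : b^T = c *: v by apply/matrixP => p q; rewrite !mxE.
  rewrite -scalemxAl -scalemxAr scalerA [v *m v^T]mx11_scalar -/s.
  rewrite -scalemx1 scalerA -[RHS]scale1r; congr (_ *: _).
  by rewrite /c -[X in _ * X]sq; field.
have Cb : C *m b = 0.
  have e : C = - C^T by rewrite CT opprK.
  rewrite /b -scalemxAr e mulNmx -trmx_mul vC trmx0 oppr0 scaler0.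
  by [].
pose y' := tv (ev R 1) b.
have xy : forall k, Bf P (x k) y' = 0.
  move=> k; rewrite /y' tv_expand Bf_sumr.
  have := congr1 (fun X : 'cV[R]_3 => X k 0) Cb; rewrite [RHS]mxE => h.
  transitivity ((C *m b) k 0); last exact: h.
  by rewrite mxE; apply: eq_bigr => j _; rewrite !mxE mulrC.
pose w (c : 'I_4) := if (c < 3)%N then x (inord c) else y'.
apply: (@rank_lb _ _ _ P w) => c1 c2; rewrite /w.
case: (ltnP c1 3) => h1; case: (ltnP c2 3) => h2.
- rewrite gram_x //; congr ((nat_of_bool _)%:R).
  by rewrite -(inj_eq val_inj) /= !inordK.
- rewrite xy (_ : (c1 == c2) = false) //.
  by apply/negbTE; apply: contraTneq h1 => ->; rewrite -leqNgt.
- rewrite Bf_sym // xy (_ : (c1 == c2) = false) //.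
  by apply/negbTE; apply: contraTneq h2 => <-; rewrite -leqNgt.
- have -> : c1 = c2.
    by apply: ord_inj; move: (ltn_ord c1) (ltn_ord c2) h1 h2; lia.
  by rewrite eqxx; apply: Bf_unit => //; exact: ev_unit.
Qed.

Unset Implicit Arguments.

Theorem lemma1 (R : realType) (M : nat) (hM : (2 <= M)%N)
    (G : 'I_((M * M - M) %/ 2) -> 'M[R]_M)
    (hGanti : forall g, (G g)^T = - G g)
    (hGorth : forall g h, g != h -> \tr (G g *m (G h)^T) = 0)
    (hGnorm : forall g, \tr (G g *m (G g)^T) = 2) :
  Pmat R M = 1%:M + \sum_(g < (M * M - M) %/ 2) (G g *t G g) /\
  psdmx (Pmat R M) /\
  unit_on_products (Pmat R M) /\
  \rank (Pmat R M) = (1 + (M * M - M) %/ 2)%N /\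
  ((M <= 3)%N ->
     forall P' : 'M[R]_(M * M), psdmx P' -> unit_on_products P' ->
       (\rank (Pmat R M) <= \rank P')%N).
Proof.
have M0 : (0 < M)%N by apply: leq_trans hM.
split; first exact: part1.
split; first exact: Pmat_psd.
split; first exact: Pmat_unit.
split; first exact: rank_Pmat.
move=> hM3 P' hP hU; rewrite rank_Pmat //.
have key : forall N, (2 <= N)%N -> (N <= 3)%N -> forall P : 'M[R]_(N * N),
    psdmx P -> unit_on_products P -> (1 + (N * N - N) %/ 2 <= \rank P)%N.
  case=> [|[|[|[|n]]]] // _ _ P hP' hU'; [exact: lb2 | exact: lb3].
exact: key.
Qed.
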